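(* In the binary noisy-label setting described in the context, for every classifier $h$ and every function $g:\{-1,+1\}^2\to\mathrm{dom}(f^* )$, $$\widetilde{d}_f(h,g)=(1-e_+-e_-)\,d_f(h,g)+\mathrm{Bias}_f(h,g).$$
   Context: $(X,Y)$ is a random pair with features $X\in\mathcal X$ and clean label $Y\in\{-1,+1\}$. A noisy label $\tilde Y\in\{-1,+1\}$ is generated from $Y$, conditionally independently of $X$ given $Y$, with noise rates $e_+={\mathbb P}(\tilde Y=-1\mid Y=+1)$, $e_-={\mathbb P}(\tilde Y=+1\mid Y=-1)$, $e_++e_-<1$. A classifier is a measurable map $h:\mathcal X\to\{-1,+1\}$. $P=P_{h\times Y}$ is the joint law of $(h(X),Y)$ on $\{-1,+1\}^2$ and $Q=Q_{h\times Y}$ the product of its marginals ${\mathbb P}(h(X)=y){\mathbb P}(Y=y')$; $\tilde P,\tilde Q$ are defined identically with $\tilde Y$ in place of $Y$. $f$ is convex with $f(1)=0$ and $f^*(u)=\sup_v\{uv-f(v)\}$ is its Fenchel conjugate with domain $\mathrm{dom}(f^* )$. Define $d_f(h,g)=\mathbb E_{Z\sim P}[g(Z)]-\mathbb E_{Z\sim Q}[f^*(g(Z))]$ and $\widetilde d_f(h,g)=\mathbb E_{Z\sim \tilde P}[g(Z)]-\mathbb E_{Z\sim \tilde Q}[f^*(g(Z))]$. For $y\in\{-1,+1\}$, $\Delta^y_f(h,g)=\mathbb E_X[g(h(X),y)]-\mathbb E_X[f^*(g(h(X),y))]$, and $\mathrm{Bias}_f(h,g)=e_+\Delta^{-1}_f(h,g)+e_-\Delta^{+1}_f(h,g)$.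 *)

(* Defs.v *)
From HB Require Import structures.
From mathcomp Require Import all_boot all_order all_algebra.
From mathcomp Require Import all_classical all_reals all_analysis.
Set Implicit Arguments. Unset Strict Implicit. Unset Printing Implicit Defensive.
Import Order.TTheory GRing.Theory Num.Theory.
Local Open Scope classical_set_scope.
Local Open Scope ring_scope.

(* Binary labels {-1,+1} are encoded by bool: true = +1, false = -1. *)
Notation lab := bool (only parsing).

Section Defs.
Variable R : realType.

(* Convexity of an extended-real valued function f : R -> \bar R
   (mathcomp's convention 0 * +oo = 0). *)
Definition econvex (f : R -> \bar R) : Prop :=
  forall (x y t : R), (0 <= t <= 1)%R ->
    (f (t * x + (1 - t) * y)%R <= t%:E * f x + (1 - t)%R%:E * f y)%E.

Definition fstar (f : R -> \bar R) (u : R) : \bar R :=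
  ereal_sup (range (fun v : R => ((u * v)%:E - f v)%E)).

Definition dom_fstar (f : R -> \bar R) : set R := [set u | (fstar f u < +oo)%E].

Variables (d : measure_display) (T : measurableType d) (P : probability T R).

Definition prob2 (U V : T -> lab) (a b : lab) : R :=
  fine (P ([set t | U t = a] `&` [set t | V t = b])).
Definition prob1 (U : T -> lab) (a : lab) : R := fine (P [set t | U t = a]).

Definition E_joint (U V : T -> lab) (phi : lab -> lab -> R) : R :=
  \sum_(a : lab) \sum_(b : lab) prob2 U V a b * phi a b.
Definition E_prod (U V : T -> lab) (phi : lab -> lab -> R) : R :=
  \sum_(a : lab) \sum_(b : lab) (prob1 U a * prob1 V b) * phi a b.

(* d_f(h,g) with HX = h(X) and label V (= Y, or Ytilde for the noisy version);
   on dom(fstar) the conjugate is finite, so we take its real value. *)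
Definition dfun (f : R -> \bar R) (HX V : T -> lab) (g : lab -> lab -> R) : R :=
  E_joint HX V g - E_prod HX V (fun a b => fine (fstar f (g a b))).

Definition Delta (f : R -> \bar R) (HX : T -> lab) (g : lab -> lab -> R) (y : lab) : R :=
  \sum_(a : lab) prob1 HX a * g a y
  - \sum_(a : lab) prob1 HX a * fine (fstar f (g a y)).

(* Bias_f(h,g) = e_+ Delta^{-1} + e_- Delta^{+1} (labels: false = -1, true = +1) *)
Definition Bias (f : R -> \bar R) (HX : T -> lab) (g : lab -> lab -> R)
    (ep em : R) : R :=
  ep * Delta f HX g false + em * Delta f HX g true.
End Defs.

(* Main.v *)
Require Import Defs.
From HB Require Import structures.
From mathcomp Require Import all_boot all_order all_algebra.
From mathcomp Require Import all_classical all_reals all_analysis.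
From mathcomp Require Import ring lra.
Import Order.TTheory GRing.Theory Num.Theory.
Local Open Scope classical_set_scope.
Local Open Scope ring_scope.

Lemma split_meas {R : realType} {d : measure_display} {T : measurableType d}
    (P : probability T R) (A : set T) (V : T -> bool) :
  measurable A -> (forall b, measurable [set t | V t = b]) ->
  fine (P A) = fine (P (A `&` [set t | V t = true])) + fine (P (A `&` [set t | V t = false])).
Proof.
move=> mA mV.
have mT : measurable (A `&` [set t | V t = true]) by apply: measurableI.
have mF : measurable (A `&` [set t | V t = false]) by apply: measurableI.
have E : P A = (P (A `&` [set t | V t = true]) + P (A `&` [set t | V t = false]))%E.
  rewrite -measureU //; last first.
    by apply/seteqP; split => t //= [[_ ->] [_]].
  congr (P _); apply/seteqP; split => t /=.
    by case: (V t) => At; [left|right].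
  by case=> -[].
rewrite E fineD //; exact: fin_num_measure.
Qed.

Lemma meas_ge0 {R : realType} {d : measure_display} {T : measurableType d}
    (P : probability T R) (A : set T) : 0 <= fine (P A).
Proof. by apply: fine_ge0; apply: measure_ge0. Qed.

Lemma aux {R : realType} (t p q s r : R) : t * q = p * s -> s = r * q ->
  0 <= t -> t <= p -> 0 <= p -> p <= q -> t = p * r.
Proof.
move=> E1 E2 t0 tp p0 pq.
have [q00|q0] := eqVneq q 0.
  have p00 : p = 0 by lra.
  rewrite p00; lra.
apply: (mulIf q0); rewrite E1 E2; ring.
Qed.

Theorem theorem3 (R : realType) (d : measure_display) (T : measurableType d)
    (P : probability T R) (dx : measure_display) (Xs : measurableType dx)
    (X : T -> Xs) (Y Yt : T -> bool) (ep em : R) (f : R -> \bar R)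
    (h : Xs -> bool) (g : bool -> bool -> R) :
  measurable_fun setT X ->
  (forall b, measurable [set t | Y t = b]) ->
  (forall b, measurable [set t | Yt t = b]) ->
  (* noise rates: e_+ = P(Yt = -1 | Y = +1), e_- = P(Yt = +1 | Y = -1) *)
  prob2 P Yt Y false true = ep * prob1 P Y true ->
  prob2 P Yt Y true false = em * prob1 P Y false ->
  ep + em < 1 ->
  (* Yt is conditionally independent of X given Y *)
  (forall (A : set Xs) (y yt : bool), measurable A ->
     fine (P (X @^-1` A `&` [set t | Y t = y] `&` [set t | Yt t = yt]))
       * prob1 P Y y
     = fine (P (X @^-1` A `&` [set t | Y t = y])) * prob2 P Y Yt y yt) ->
  (* f convex, proper (never -oo), with f(1) = 0 *)
  econvex f -> (forall v, f v != -oo%E) -> f 1 = 0%E ->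
  (* h is a classifier: measurable map into {-1,+1} *)
  (forall b, measurable (h @^-1` [set b])) ->
  (* g : {-1,+1}^2 -> dom fstar *)
  (forall a b, dom_fstar f (g a b)) ->
  dfun P f (h \o X) Yt g
  = (1 - ep - em) * dfun P f (h \o X) Y g + Bias P f (h \o X) g ep em.
Proof.
move=> mX mY mYt nT nF _ CI _ _ _ mh _.
pose HS a := [set t | (h \o X) t = a].
have HSE a : X @^-1` (h @^-1` [set a]) = HS a by apply/seteqP; split.
have mH a : measurable (HS a).
  by rewrite -HSE -[X @^-1` _]setTI; apply: mX.
pose Tr a y b := fine (P (HS a `&` [set t | Y t = y] `&` [set t | Yt t = b])).
pose s y b := prob2 P Y Yt y b.
pose r y b : R := if y then (if b then 1 - ep else ep) else (if b then em else 1 - em).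
have F1 a b : prob2 P (h \o X) Yt a b = Tr a true b + Tr a false b.
  rewrite /prob2 (split_meas P _ Y (measurableI _ _ (mH a) (mYt b)) mY).
  by rewrite /Tr !(setIAC _ [set t | Yt t = b]).
have F2 a y : prob2 P (h \o X) Y a y = Tr a y true + Tr a y false.
  by rewrite /prob2 (split_meas P _ Yt (measurableI _ _ (mH a) (mY y)) mYt).
have F3 a : prob1 P (h \o X) a = prob2 P (h \o X) Y a true + prob2 P (h \o X) Y a false.
  by rewrite /prob1 (split_meas P _ Y (mH a) mY).
have F4 y : prob1 P Y y = prob2 P (h \o X) Y true y + prob2 P (h \o X) Y false y.
  by rewrite /prob1 /prob2 (split_meas P _ (h \o X) (mY y) mH) !(setIC [set t | Y t = y]).
have F6 b : prob1 P Yt b = s true b + s false b.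
  by rewrite /prob1 /s /prob2 (split_meas P _ Y (mYt b) mY) !(setIC [set t | Yt t = b]).
have F5 y : prob1 P Y y = s y true + s y false.
  by rewrite /prob1 /s /prob2 (split_meas P _ Yt (mY y) mYt).
have S y b : s y b = r y b * prob1 P Y y.
  have sw y' b' : s y' b' = prob2 P Yt Y b' y' by rewrite /s /prob2 setIC.
  case: y; case: b; rewrite /r.
  - have := F5 true; rewrite (sw true false) nT; nra.
  - by rewrite sw nT.
  - by rewrite sw nF.
  - have := F5 false; rewrite (sw false true) nF; nra.
have qF : prob1 P Y false = 1 - prob1 P Y true.
  have := split_meas P _ Y measurableT mY; rewrite !setTI probability_setT /= => E.
  rewrite /prob1; lra.
have TrE a y b : Tr a y b = prob2 P (h \o X) Y a y * r y b.
  have Ht0 := meas_ge0 P (HS a `&` [set t | Y t = y] `&` [set t | Yt t = b]).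
  have tp : Tr a y b <= prob2 P (h \o X) Y a y.
    rewrite F2; case: b Ht0 => Ht0;
    have := meas_ge0 P (HS a `&` [set t | Y t = y] `&` [set t | Yt t = true]);
    have := meas_ge0 P (HS a `&` [set t | Y t = y] `&` [set t | Yt t = false]); rewrite /Tr; lra.
  have p0 := meas_ge0 P (HS a `&` [set t | Y t = y]).
  have pq : prob2 P (h \o X) Y a y <= prob1 P Y y.
    rewrite F4; case: a Ht0 tp p0 => Ht0 tp p0; have := meas_ge0 P (HS true `&` [set t | Y t = y]);
    have := meas_ge0 P (HS false `&` [set t | Y t = y]); rewrite /prob2; lra.
  apply: (@aux _ _ _ (prob1 P Y y) (s y b) (r y b) _ (S y b) Ht0 tp p0 pq).
  have := CI (h @^-1` [set a]) y b (mh a).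
  by rewrite HSE.
rewrite /dfun /E_joint /E_prod /Bias /Delta !big_bool /=.
rewrite !F1 !TrE !F3 !F6 !S qF /r.
ring.
Qed.
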